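(* Let $J$ and $K$ be subcontinua of the Cantor fan $C=F/{\sim}$ with $v\in K\subseteq J$, and let $r:J\to K$ be a retraction. Suppose there is a retraction $R:H_J\to H_K$ such that $q(R(x))=r(q(x))$ for every $x\in H_J$. Then $r$ is semi-simple, i.e. for every leg $A\in\mathcal L(J)$ there is a leg $B\in\mathcal L(J)$ with $r(A)\subseteq B$.
   Context: Let $Y$ be a Cantor set, $F=Y\times[0,1]$, and let $\sim$ be the equivalence relation on $F$ given by $(x,t)\sim(y,s)$ iff $(x,t)=(y,s)$ or $s=t=0$. Let $C=F/{\sim}$ (a Cantor fan), $q:F\to C$ the quotient map, and $v=q(Y\times\{0\})$ the top of $C$. For a subcontinuum $K$ of $C$ put $H_K=\mathrm{Cl}_F(q^{-1}(K\setminus\{v\}))$ (a fence of $K$); note $H_K\subseteq H_J$ when $K\subseteq J$. For a subcontinuum $J$ of $C$ containing $v$ (which is a fan), an end point of $J$ is a point that is an end point of every arc in $J$ containing it; a leg of $J$ is an arc from $v$ to an end point $e\neq v$ of $J$; $\mathcal L(J)$ denotes the set of legs. A retraction from $X$ onto a subspace $Z$ is a continuous map $r:X\to Z$ with $r(z)=z$ for all $z\in Z$. *)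

(* Defs.v *)
From HB Require Import structures.
From mathcomp Require Import all_boot all_order all_algebra.
From mathcomp Require Import all_classical all_reals all_analysis.
Set Implicit Arguments. Unset Strict Implicit. Unset Printing Implicit Defensive.
Import Order.TTheory GRing.Theory Num.Theory.
Import numFieldTopology.Exports.
Local Open Scope classical_set_scope.
Local Open Scope ring_scope.

Notation unitI R := (set_type (`[0%R, 1%R]%classic : set R)).

(* F = Y x [0,1], with Y the Cantor set (Cantor space bool^nat). *)
Notation fanF R := (cantor_space * unitI R)%type.

Definition fan_rel (R : realType) (a b : fanF R) : Prop :=
  a = b \/ (\val a.2 = 0 /\ \val b.2 = 0).

Definition is_fan_quotient (R : realType) (C : topologicalType) (q : fanF R -> C) : Prop :=
  [/\ (forall c : C, exists x, q x = c),
      (forall a b, q a = q b <-> fan_rel a b) &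
      (forall U : set C, open U <-> open (q @^-1` U))].

Lemma zero_in_unitI (R : realType) : (0 : R) \in (`[0%R, 1%R]%classic : set R).
Proof. by apply/mem_set; rewrite /= in_itv /= lexx ler01. Qed.

Definition zeroI (R : realType) : unitI R := exist _ 0 (zero_in_unitI R).

(* v = q(Y x {0}), the top of the fan. *)
Definition fan_top (R : realType) (C : topologicalType) (q : fanF R -> C) : C :=
  q ((fun _ => false), zeroI R).

Definition subcontinuum (C : topologicalType) (K : set C) : Prop :=
  [/\ K !=set0, compact K & connected K].

Definition fence (R : realType) (C : topologicalType) (q : fanF R -> C) (K : set C)
  : set (fanF R) := closure (q @^-1` (K `\ fan_top q)).

(* A is an arc with end points a and b: image of a homeomorphic embedding
   f of [0,1] with f 0 = a and f 1 = b. *)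
Definition arc_from_to (R : realType) (C : topologicalType) (A : set C) (a b : C) : Prop :=
  exists (f : R -> C) (g : C -> R),
    [/\ {within `[0%R, 1%R]%classic, continuous f}, {within A, continuous g},
        f @` `[0%R, 1%R]%classic = A,
        (forall t, `[0%R, 1%R]%classic t -> g (f t) = t) &
        f 0 = a /\ f 1 = b].

Definition end_point (R : realType) (C : topologicalType) (J : set C) (e : C) : Prop :=
  J e /\ forall (A : set C) (a b : C), A `<=` J -> arc_from_to R A a b -> A e ->
          e = a \/ e = b.

Definition leg (R : realType) (C : topologicalType) (q : fanF R -> C) (J A : set C) : Prop :=
  exists e : C, [/\ end_point R J e, e <> fan_top q, A `<=` J &
                    arc_from_to R A (fan_top q) e].

(* r : A -> B is a retraction (modelled as a map on the ambient space) *)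
Definition retraction (X : topologicalType) (A B : set X) (r : X -> X) : Prop :=
  [/\ {within A, continuous r}, r @` A `<=` B & forall z, B z -> r z = z].

Definition semi_simple (R : realType) (C : topologicalType) (q : fanF R -> C)
  (J : set C) (r : C -> C) : Prop :=
  forall A, leg q J A -> exists B, leg q J B /\ r @` A `<=` B.

(* Main.v *)
Require Import Defs.
From HB Require Import structures.
From mathcomp Require Import all_boot all_order all_algebra.
From mathcomp Require Import all_classical all_reals all_analysis.
From mathcomp Require Import lra.
Import Order.TTheory GRing.Theory Num.Theory.
Import numFieldTopology.Exports.
Local Open Scope classical_set_scope.
Local Open Scope ring_scope.
Set Implicit Arguments. Unset Strict Implicit.

Lemma fst_cont (X Y : topologicalType) : continuous (@fst X Y).
Proof. move=> x; exact: cvg_fst. Qed.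
Lemma snd_cont (X Y : topologicalType) : continuous (@snd X Y).
Proof. move=> x; exact: cvg_snd. Qed.
Lemma pair_cont (X Y Z : topologicalType) (f : X -> Y) (g : X -> Z) :
  continuous f -> continuous g -> continuous (fun x => (f x, g x)).
Proof. move=> cf cg x; apply: cvg_pair; [exact: cf|exact: cg]. Qed.
Lemma val_cont {R : realType} : continuous (fun x : unitI R => \val x).
Proof. exact: initial_continuous. Qed.

Lemma unitI_bnd {R : realType} (x : unitI R) : 0 <= \val x <= 1.
Proof. by have := set_valP x; rewrite /= in_itv. Qed.

Lemma sep_conn (T : topologicalType) (U V S : set T) :
  open U -> open V -> (forall c, U c -> V c -> False) ->
  connected S -> S `<=` U `|` V -> S `<=` U \/ S `<=` V.
Proof.
move=> oU oV dUV cS SUV.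
have [[c [Sc Uc]]|n0] := pselect ((S `&` U) !=set0).
  left; have E : S `&` U = S.
    apply: cS; first by exists c.
    - by exists U.
    - exists (~` V); first exact: open_closedC.
      apply/seteqP; split => x [Sx Ux]; split => //.
        by move=> Vx; exact: (dUV x).
      by case: (SUV x Sx).
  by move=> x Sx; rewrite -E in Sx; case: Sx.
right => x Sx; case: (SUV x Sx) => // Ux; exfalso; apply: n0; by exists x.
Qed.

Lemma cantor_sep {x y : cantor_space} : x <> y ->
  exists W : set cantor_space, [/\ open W, open (~` W), W x & ~ W y].
Proof.
move=> /eqP xy; have [U [[oU cU] Ux Uy]] := cantor_zero_dimensional xy.
exists U; split => //; exact: closed_openC.
Qed.

Lemma cont_open (X Y : topologicalType) (f : X -> Y) (A : set Y) :
  continuous f -> open A -> open (f @^-1` A).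
Proof. by move=> /continuousP h /h. Qed.

Lemma val2_cont {R : realType} (X : topologicalType) :
  continuous (fun x : X * unitI R => \val x.2).
Proof.
move=> x; apply: (@continuous_comp _ _ _ snd (fun y : unitI R => \val y)).
  exact: snd_cont. exact: val_cont.
Qed.

Lemma fst_const (X : topologicalType) (S : set (cantor_space * X)) :
  connected S -> forall a b, S a -> S b -> a.1 = b.1.
Proof.
move=> cS a b Sa Sb; apply: contrapT => fne.
have [W [oW oWC W1 W2]] := cantor_sep fne.
have := @sep_conn _ (fst @^-1` W) (fst @^-1` (~` W)) S.
case.
- by apply: cont_open => //; exact: fst_cont.
- by apply: cont_open => //; exact: fst_cont.
- by move=> c /= h1 h2.
- by [].
- move=> c Sc; case: (pselect (W c.1)) => Wc; [left|right]; by [].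
- by move=> /(_ b Sb).
- by move=> /(_ a Sa) /=.
Qed.

Lemma within_nbhs_open (T U : topologicalType) (A : set T) (f : T -> U) x (N : set U) :
  {within A, continuous f} -> A x -> open N -> N (f x) ->
  nbhs x (fun t => A t -> N (f t)).
Proof.
move=> cf Ax oN Nfx.
suff : within A (nbhs x) (f @^-1` N) by [].
rewrite (nbhs_subspace_in Ax).
exact: (cf x _ (open_nbhs_nbhs (conj oN Nfx))).
Qed.

Lemma R_nbhs_itv {R : realType} (x : R) (P : set R) : nbhs x P ->
  exists2 e, 0 < e & forall t, x - e <= t <= x + e -> P t.
Proof.
move=> /nbhs_ballP [e e0 eP]; exists (e / 2); first by rewrite divr_gt0.
move=> t ht; apply: (@subset_ball_prop_in_itvcc _ x (e/2) P).
- by rewrite divr_gt0.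
- by rewrite ball_normE mulrC divfK //; apply: lt0r_neq0.
- by rewrite in_itv /=.
Qed.


Section Fan.
Variables (R : realType) (C : topologicalType) (q : fanF R -> C).
Hypothesis hq : is_fan_quotient q.

Lemma q_surj c : exists x, q x = c. Proof. by case: hq. Qed.
Lemma q_eq a b : q a = q b <-> fan_rel a b. Proof. by case: hq. Qed.
Lemma q_open U : open (q @^-1` U) -> open U. Proof. by case: hq => _ _ h /h. Qed.
Lemma q_cont : continuous q.
Proof. apply/continuousP => U oU; case: hq => _ _ h; exact/h. Qed.

Definition pre (c : C) : fanF R := projT1 (cid (q_surj c)).
Definition hI c := (pre c).2.
Definition ht c : R := \val (hI c).
Definition fb c := (pre c).1.

Lemma preK c : q (pre c) = c. Proof. exact: (projT2 (cid (q_surj c))). Qed.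
Lemma qpair c : q (fb c, hI c) = c. Proof. by rewrite /fb /hI -surjective_pairing preK. Qed.
Lemma ht_q x : ht (q x) = \val x.2.
Proof.
rewrite /ht /hI; have := preK (q x); move/q_eq => [->//|[h1 h2]]; by rewrite h1 h2.
Qed.
Lemma hI_q x : hI (q x) = x.2.
Proof. apply: val_inj; exact: ht_q. Qed.
Lemma pre_q x : 0 < \val x.2 -> pre (q x) = x.
Proof.
move=> xp; have := preK (q x); move/q_eq => [//|[h1 h2]].
by rewrite h2 ltxx in xp.
Qed.
Lemma fb_q x : 0 < \val x.2 -> fb (q x) = x.1.
Proof. by move=> /pre_q; rewrite /fb => ->. Qed.
Lemma ht_ge0 c : 0 <= ht c. Proof. by case/andP: (unitI_bnd (hI c)). Qed.
Lemma ht_le1 c : ht c <= 1. Proof. by case/andP: (unitI_bnd (hI c)). Qed.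

Local Notation v := (fan_top q).
Lemma q_v x : q x = v <-> \val x.2 = 0.
Proof.
rewrite /fan_top; split; first by move/q_eq => [->//|[]].
by move=> h; apply/q_eq; right.
Qed.
Lemma ht_v c : ht c = 0 <-> c = v.
Proof. by rewrite -{2}(preK c) q_v. Qed.
Lemma ht_top : ht v = 0. Proof. exact/ht_v. Qed.
Lemma ht_gt0 c : c <> v -> 0 < ht c.
Proof. by move=> cv; rewrite lt_neqAle ht_ge0 andbT eq_sym; apply/eqP => /ht_v. Qed.

Lemma same_pt c1 c2 : fb c1 = fb c2 -> ht c1 = ht c2 -> c1 = c2.
Proof.
move=> e1 e2; rewrite -(qpair c1) -(qpair c2) e1; congr (q (_, _)).
exact: val_inj.
Qed.

Lemma ht_cont : continuous ht.
Proof.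
apply: (proj2 (continuousP _)) => O oO; apply: q_open.
have -> : q @^-1` (ht @^-1` O) = (fun x : fanF R => \val x.2) @^-1` O.
  by apply/seteqP; split => x /=; rewrite ht_q.
by apply: cont_open => //; exact: val2_cont.
Qed.

Lemma hI_cont : continuous hI.
Proof.
apply: (@continuous_comp_initial _ _ _ _ (hI : C -> initial_topology set_val)).
exact: ht_cont.
Qed.

Lemma pos_open {W : set cantor_space} : open W ->
  open [set c | 0 < ht c /\ W (fb c)].
Proof.
move=> oW; apply: q_open.
have -> : q @^-1` [set c | 0 < ht c /\ W (fb c)] =
   ((fun x : fanF R => \val x.2) @^-1` [set t | 0 < t]) `&` (fst @^-1` W).
  apply/seteqP; split => x /=; rewrite ht_q.
    by move=> [h1 h2]; split => //; rewrite -fb_q.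
  by move=> [h1 h2]; split => //; rewrite fb_q.
apply: openI.
  by apply: cont_open; [exact: val2_cont|exact: open_gt].
by apply: cont_open => //; exact: fst_cont.
Qed.

Lemma lt_open a : open [set c | ht c < a].
Proof. apply: (@cont_open _ _ ht [set t | t < a]); [exact: ht_cont|exact: open_lt]. Qed.
Lemma gt_open a : open [set c | a < ht c].
Proof. apply: (@cont_open _ _ ht [set t | a < t]); [exact: ht_cont|exact: open_gt]. Qed.

Lemma C_hausdorff : hausdorff_space C.
Proof.
rewrite open_hausdorff => c1 c2 /eqP c12.
have [h12|h21|e] := ltgtP (ht c1) (ht c2).
- exists ([set c | ht c < (ht c1 + ht c2) / 2], [set c | (ht c1 + ht c2) / 2 < ht c]) => /=.
    by split; rewrite inE /=; lra.
  split; [exact: lt_open|exact: gt_open|].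
  by apply/eqP/seteqP; split => x // [/= h1 h2]; exfalso; move: (lt_trans h1 h2); rewrite ltxx.
- exists ([set c | (ht c1 + ht c2) / 2 < ht c], [set c | ht c < (ht c1 + ht c2) / 2]) => /=.
    by split; rewrite inE /=; lra.
  split; [exact: gt_open|exact: lt_open|].
  by apply/eqP/seteqP; split => x // [/= h1 h2]; exfalso; move: (lt_trans h1 h2); rewrite ltxx.
have fne : fb c1 <> fb c2 by move=> ef; exact/c12/same_pt.
have hp : 0 < ht c1.
  apply: ht_gt0 => c1v; apply: c12; rewrite c1v; apply/esym/ht_v.
  by rewrite -e c1v ht_top.
have [W [oW oWC W1 W2]] := cantor_sep fne.
exists ([set c | 0 < ht c /\ W (fb c)], [set c | 0 < ht c /\ (~` W) (fb c)]) => /=.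
  by split; rewrite inE /=; split => //; rewrite -e.
split; [exact: (pos_open oW)|exact: (pos_open oWC)|].
by apply/eqP/seteqP; split => x // [/= [_ h1] [_ h2]].
Qed.

Lemma fiber_const (S : set C) : connected S -> (forall c, S c -> 0 < ht c) ->
  forall c1 c2, S c1 -> S c2 -> fb c1 = fb c2.
Proof.
move=> cS Sp c1 c2 S1 S2; apply: contrapT => fne.
have [W [oW oWC W1 W2]] := cantor_sep fne.
have := @sep_conn _ [set c | 0 < ht c /\ W (fb c)] [set c | 0 < ht c /\ (~` W) (fb c)] S
  (pos_open oW) (pos_open oWC).
case.
- by move=> c [_ ?] [_ ?].
- by [].
- move=> c Sc; have := Sp c Sc; case: (pselect (W (fb c))) => Wc; [left|right]; by split.
- by move=> /(_ c2 S2) [].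
- by move=> /(_ c1 S1) [_ /= /(_ W1)].
Qed.

Lemma clamp_in (u : R) : Num.max 0 (Num.min u 1) \in (`[0%R, 1%R]%classic : set R).
Proof.
apply/mem_set; rewrite /= in_itv /=; apply/andP; split.
  by rewrite le_max lexx.
by rewrite ge_max ler01 ge_min lexx orbT.
Qed.
Definition clamp (u : R) : unitI R := exist _ (Num.max 0 (Num.min u 1)) (clamp_in u).
Lemma clamp_val u : 0 <= u <= 1 -> \val (clamp u) = u.
Proof.
move=> /andP[u0 u1] /=; have -> : Num.min u 1 = u by rewrite min_l.
by rewrite max_r.
Qed.
Lemma clamp_cont : continuous clamp.
Proof.
apply: (@continuous_comp_initial _ _ _ _ (clamp : R -> initial_topology set_val)).
change (continuous ((fun=> (0:R^o)) \max ((fun x : R^o => x) \min (fun=> (1:R^o))))).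
move=> x; apply: continuous_max; first exact: cst_continuous.
apply: continuous_min; first by [].
exact: cst_continuous.
Qed.
Definition emb (y : cantor_space) (u : R) : C := q (y, clamp u).
Lemma emb_cont y : continuous (emb y).
Proof.
move=> x; apply: (@continuous_comp _ _ _ (fun u => (y, clamp u)) q).
  apply: pair_cont; [exact: cst_continuous|exact: clamp_cont].
exact: q_cont.
Qed.
Lemma ht_emb y u : 0 <= u <= 1 -> ht (emb y u) = u.
Proof. by move=> h; rewrite /emb ht_q; exact: clamp_val. Qed.
Lemma fb_emb y u : 0 < u <= 1 -> fb (emb y u) = y.
Proof.
move=> /andP[h1 h2]; rewrite /emb fb_q //.
have -> : \val (y, clamp u).2 = u by apply: clamp_val; rewrite h2 ltW.
by [].
Qed.
Lemma emb0 y : emb y 0 = v.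
Proof. by apply/ht_v; rewrite ht_emb // lexx ler01. Qed.
Lemma emb_pt c : emb (fb c) (ht c) = c.
Proof.
rewrite -[in RHS](qpair c) /emb; congr (q (_, _)); apply: val_inj.
by rewrite clamp_val // ht_ge0 ht_le1.
Qed.

End Fan.


Section Step2.
Variables (R : realType) (C : topologicalType) (q : fanF R -> C).
Hypothesis hq : is_fan_quotient q.
Variables (J : set C).
Hypothesis hJ : subcontinuum J.
Local Notation v := (fan_top q).
Local Notation ht := (ht hq).
Local Notation fb := (fb hq).
Local Notation emb := (emb q).

Lemma J_closed : closed J.
Proof. case: hJ => _ cJ _; exact: (compact_closed (C_hausdorff hq) cJ). Qed.
Lemma J_conn : connected J.
Proof. by case: hJ. Qed.

Lemma emb_val y (u : unitI R) : emb y (\val u) = q (y, u).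
Proof.
rewrite /emb; congr (q (_, _)); apply: val_inj; apply: clamp_val.
exact: unitI_bnd.
Qed.

Lemma arc_inj (f : R -> C) (g : C -> R) : 
  (forall t, `[0%R, 1%R]%classic t -> g (f t) = t) ->
  forall t t', `[0%R, 1%R]%classic t -> `[0%R, 1%R]%classic t' -> f t = f t' -> t = t'.
Proof. by move=> gf t t' ht ht' e; rewrite -(gf t ht) -(gf t' ht') e. Qed.

Lemma endpt y s : 0 < s <= 1 ->
  (forall u, 0 <= u <= 1 -> J (emb y u) -> u <= s) -> J (emb y s) ->
  end_point R J (emb y s).
Proof.
move=> /andP[s0 s1] Pub Js; split => // A' a b A'J [f2 [g2 [cf2 cg2 im2 gf2 [fa fb2]]]] A'e.
have [t0 t0I ft0] : (f2 @` `[0%R,1%R]%classic) (emb y s) by rewrite im2.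
have inj := arc_inj gf2.
have /andP[t00 t01] : 0 <= t0 <= 1 by move: t0I; rewrite /= in_itv.
have [t0z|t0n0] := eqVneq t0 0; first by left; rewrite -ft0 t0z.
have [t0o|t0n1] := eqVneq t0 1; first by right; rewrite -ft0 t0o.
have t0p : 0 < t0 by rewrite lt_neqAle eq_sym t0n0.
have t0l : t0 < 1 by rewrite lt_neqAle t0n1.
exfalso.
have htE : ht (emb y s) = s by apply: ht_emb; rewrite s1 ltW.
have fbE : fb (emb y s) = y by apply: fb_emb; rewrite s0 s1.
have Nb := within_nbhs_open cf2 t0I (gt_open hq 0).
have [e e0 eP] : exists2 e, 0 < e & forall t, t0 - e <= t <= t0 + e ->
    `[0%R,1%R]%classic t -> 0 < ht (f2 t).
  by apply: R_nbhs_itv; apply: Nb; rewrite /= ft0 htE.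
pose d := Num.min e (Num.min t0 (1 - t0)).
have d0 : 0 < d by rewrite /d !lt_min e0 t0p subr_gt0 t0l.
have de : d <= e by rewrite /d ge_min lexx.
have dt0 : d <= t0 by rewrite /d !ge_min lexx orbT.
have dt1 : d <= 1 - t0 by rewrite /d !ge_min lexx !orbT.
have LI : forall t, t0 - d <= t <= t0 + d -> `[0%R,1%R]%classic t.
  move=> t /andP[h1 h2]; rewrite /= in_itv /=; apply/andP; split; lra.
have LN : forall t, t0 - d <= t <= t0 + d -> 0 < ht (f2 t).
  move=> t ht; apply: eP (LI t ht); move: ht => /andP[h1 h2].
  apply/andP; split; lra.
have Lsub : `[t0 - d, t0 + d]%classic `<=` `[0%R,1%R]%classic.
  by move=> t; rewrite /= in_itv /= => /LI.
have Lfb : forall t, t0 - d <= t <= t0 + d -> fb (f2 t) = y.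
  move=> t ht; rewrite -fbE -ft0.
  apply: (@fiber_const _ _ _ hq (f2 @` `[t0 - d, t0 + d]%classic)).
  - apply: connected_continuous_connected.
      by apply/connected_intervalP; exact: interval_is_interval.
    exact: continuous_subspaceW Lsub cf2.
  - by move=> c [t' ht' <-]; apply: LN; move: ht'; rewrite /= in_itv.
  - by exists t => //; rewrite /= in_itv.
  - exists t0 => //; rewrite /= in_itv /=; apply/andP; split; lra.
have Lht : forall t, t0 - d <= t <= t0 + d -> ht (f2 t) <= s.
  move=> t ht; apply: Pub; first by rewrite ht_ge0 ht_le1.
  rewrite -(Lfb t ht) emb_pt; apply: A'J; rewrite -im2; exists t => //.
  exact: LI.
have same : forall t t', t0 - d <= t <= t0 + d -> t0 - d <= t' <= t0 + d ->
    ht (f2 t) = ht (f2 t') -> t = t'.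
  move=> t t' h h' e1; apply: inj; [exact: LI|exact: LI|].
  by apply: (@same_pt _ _ _ hq (f2 t) (f2 t') _ e1); rewrite !Lfb.
have cu : forall a' b', `[a', b']%classic `<=` `[t0 - d, t0 + d]%classic ->
    {within `[a', b']%classic, continuous (fun t => ht (f2 t))}.
  move=> a' b' sab; apply: (@within_continuous_comp _ _ _ _ f2 (ht)).
    by move=> c _; exact: ht_cont.
  apply: continuous_subspaceW cf2; exact: subset_trans sab Lsub.
have hs0 : ht (f2 t0) = s by rewrite ft0.
have Lt0 : t0 - d <= t0 <= t0 + d by apply/andP; split; lra.
have La : t0 - d <= t0 - d <= t0 + d by apply/andP; split; lra.
have Lb : t0 - d <= t0 + d <= t0 + d by apply/andP; split; lra.
case: (leP (ht (f2 (t0 - d))) (ht (f2 (t0 + d)))) => h.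
- have [c cI uc] : exists2 c, c \in `[t0 - d, t0] & ht (f2 c) = ht (f2 (t0 + d)).
    apply: IVT; first lra.
      apply: cu => t; rewrite /= !in_itv /= => /andP[h1 h2]; apply/andP; split; lra.
    rewrite hs0; apply/andP; split.
      by rewrite ge_min h.
    by rewrite le_max (Lht _ Lb) orbT.
  move: cI; rewrite in_itv /= => /andP[c1 c2].
  have := same c (t0 + d); rewrite uc => /(_ _ Lb erefl).
  have Lc : t0 - d <= c <= t0 + d by apply/andP; split; lra.
  move=> /(_ Lc) E; lra.
- have [c cI uc] : exists2 c, c \in `[t0, t0 + d] & ht (f2 c) = ht (f2 (t0 - d)).
    apply: IVT; first lra.
      apply: cu => t; rewrite /= !in_itv /= => /andP[h1 h2]; apply/andP; split; lra.
    rewrite hs0; apply/andP; split.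
      by rewrite ge_min (ltW h) orbT.
    by rewrite le_max (Lht _ La).
  move: cI; rewrite in_itv /= => /andP[c1 c2].
  have Lc : t0 - d <= c <= t0 + d by apply/andP; split; lra.
  have E := same c (t0 - d) Lc La uc; lra.
Qed.

Lemma fiber_leg y (Z : set C) : J v -> Z `<=` J ->
  (forall z, Z z -> exists u, z = q (y, u)) -> (exists z, Z z /\ z <> v) ->
  exists B, leg q J B /\ Z `<=` B.
Proof.
move=> Jv ZJ Zy [z0 [Zz0 z0v]].
have [u0 ez0] := Zy z0 Zz0.
pose P := [set u : R | (0 <= u <= 1) /\ J (emb y u)].
have Pu0 : P (\val u0).
  by split; [exact: unitI_bnd | rewrite emb_val -ez0; exact: ZJ].
have u0p : 0 < \val u0.
  by have := ht_gt0 hq z0v; rewrite ez0 (ht_q hq).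
have cP : closed P.
  have -> : P = `[0%R, 1%R]%classic `&` (emb y @^-1` J).
    by apply/seteqP; split => u /=; rewrite in_itv.
  apply: closedI; first exact: itv_closed.
  apply: preimage_closed; last exact: J_closed.
  move=> x _; exact: (emb_cont hq).
have hsP : has_sup P.
  by split; [exists (\val u0) | exists 1 => u [/andP [_ h] _]].
pose s := sup P.
have Ps : P s.
  apply: (itv_closed_supremums _ cP); first by exists (\val u0).
  split; first exact: sup_upper_bound.
  move=> x ub; apply: ge_sup => //; by exists (\val u0).
have Pub : forall u, 0 <= u <= 1 -> J (emb y u) -> u <= s.
  by move=> u h1 h2; apply: sup_upper_bound.
have s0 : 0 < s by apply: (lt_le_trans u0p); apply: Pub; case: Pu0.
have s1 : s <= 1 by case: Ps => /andP[].
have Bsub : forall u, 0 <= u <= s -> J (emb y u).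
  move=> u /andP[u0' us].
  have [->|un0] := eqVneq u 0; first by rewrite (emb0 hq).
  have [->|uns] := eqVneq u s; first by case: Ps.
  have up : 0 < u by rewrite lt_neqAle eq_sym un0.
  have ul : u < s by rewrite lt_neqAle uns.
  apply: contrapT => nJ.
  pose Q := [set w : cantor_space | J (q (w, clamp u))].
  have cQ : closed Q.
    apply: preimage_closed; last exact: J_closed.
    move=> w _; apply: (@continuous_comp _ _ _ (fun w => (w, clamp u)) q).
      by apply: pair_cont; [move=> ?; exact: cvg_id|exact: cst_continuous].
    exact: (q_cont hq).
  have nQ : nbhs y (~` Q).
    by apply: open_nbhs_nbhs; split; [exact: closed_openC|exact: nJ].
  have [D [Dy cD] DQ] := zero_dimensional_cvg cantor_space_hausdorff
     cantor_zero_dimensional cantor_space_compact nQ.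
  have oD : open D by case: cD.
  have oDC : open (~` D) by case: cD => _ /closed_openC.
  have := @sep_conn _ ([set c | u < ht c] `&` [set c | 0 < ht c /\ D (fb c)])
    ([set c | ht c < u] `|` [set c | 0 < ht c /\ (~` D) (fb c)]) J.
  case.
  - exact: openI (gt_open hq u) (pos_open hq oD).
  - exact: openU (lt_open hq u) (pos_open hq oDC).
  - move=> c [/= h1 [_ h2]] [/= h3|[_ h4]] //.
    by move: (lt_trans h1 h3); rewrite ltxx.
  - exact: J_conn.
  - move=> c Jc; case: (ltgtP (ht c) u) => h.
    + by right; left.
    + case: (pselect (D (fb c))) => Dc.
        by left; split => //; split => //; exact: lt_trans h.
      by right; right; split => //; exact: lt_trans h.
    + case: (pselect (D (fb c))) => Dc.
        exfalso; apply: (DQ _ Dc); rewrite /Q /=.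
        have -> : q (fb c, clamp u) = emb (fb c) (ht c) by rewrite h.
        by rewrite (emb_pt hq).
      by right; right; split => //; rewrite h.
  - move=> /(_ _ Jv) [/= h _]; move: h; rewrite (ht_top hq) => h.
    by move: (lt_trans up h); rewrite ltxx.
  - have Js : J (emb y s) by case: Ps.
    have htE : ht (emb y s) = s by apply: ht_emb; rewrite s1 ltW.
    have fbE : fb (emb y s) = y by apply: fb_emb; rewrite s0 s1.
    move=> /(_ _ Js) [/= h|[_ /= h]].
      by move: h; rewrite htE => h; move: (lt_trans h ul); rewrite ltxx.
    by apply: h; rewrite fbE.
exists (emb y @` `[0%R, s]%classic); split.
  exists (emb y s); split.
  - by apply: endpt => //; [rewrite s0 s1 | case: Ps].
  - move=> ev; have h : ht (emb y s) = s by apply: ht_emb; rewrite s1 ltW.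
    by move: s0; rewrite -h ev (ht_top hq) ltxx.
  - by move=> c [u hu <-]; apply: Bsub; move: hu; rewrite /= in_itv.
  - exists (fun t => emb y (t * s)), (fun c => ht c / s); split.
    + apply: continuous_subspaceT.
      have h : continuous (emb y \o (fun t => t * s)).
        move=> t; apply: continuous_comp; first exact: mulrr_continuous.
        exact: (emb_cont hq).
      exact: h.
    + apply: continuous_subspaceT.
      have h : continuous ((fun t => t * s^-1) \o ht).
        move=> t; apply: (@continuous_comp _ R _ ht (fun t : R => t * s^-1)).
          exact: ht_cont.
        exact: mulrr_continuous.
      exact: h.
    + apply/seteqP; split => c [t ht' <-].
        exists (t * s) => //; move: ht'; rewrite /= !in_itv /= => /andP[h1 h2].
        by rewrite mulr_ge0 ?(ltW s0) //= ler_piMl // ltW.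
      exists (t / s); last by rewrite divfK // gt_eqF.
      move: ht'; rewrite /= !in_itv /= => /andP[h1 h2].
      by rewrite divr_ge0 ?(ltW s0) //= ler_pdivrMr // mul1r.
    + move=> t; rewrite /= in_itv /= => /andP[h1 h2].
      rewrite ht_emb ?mulfK ?gt_eqF //.
      by rewrite mulr_ge0 ?(ltW s0) //= (le_trans _ s1) // ler_piMl // ltW.
    + by rewrite mul0r mul1r (emb0 hq).
move=> z Zz; have [u ez] := Zy z Zz.
have Pu : P (\val u) by split; [exact: unitI_bnd | rewrite emb_val -ez; exact: ZJ].
exists (\val u); last by rewrite emb_val ez.
have [/andP[h1 h2] Ju] := Pu; by rewrite /= in_itv /= h1 Pub ?h1.
Qed.

End Step2.


Lemma main_aux (R : realType) (C : topologicalType) (q : fanF R -> C)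
  (hq : is_fan_quotient q) (J K : set C)
  (hJ : subcontinuum J) (hK : subcontinuum K)
  (hv : K (fan_top q)) (hKJ : K `<=` J)
  (r : C -> C) (hr : retraction J K r)
  (Rt : fanF R -> fanF R) (hR : retraction (fence q J) (fence q K) Rt)
  (hcomm : forall x, fence q J x -> q (Rt x) = r (q x)) :
  semi_simple q J r.
Proof.
move=> A [e [epJ ev AJ [f [g [cf cg fA gf [f0 f1]]]]]].
case: hr => _ rJK rK.
pose Z := r @` A.
have I01 : `](0:R), (1:R)]%classic `<=` `[(0:R), (1:R)]%classic.
  by move=> t; rewrite /= !in_itv /= => /andP[h1 h2]; rewrite h2 ltW.
have I0 : `[(0:R), (1:R)]%classic (0 : R) by rewrite /= in_itv /= lexx ler01.
have Av : A (fan_top q) by rewrite -fA -f0; exists 0.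
case: (pselect (exists z, Z z /\ z <> fan_top q)); last first.
  move=> nz; exists A; split.
    by exists e; split => //; exists f, g; split.
  move=> z Zz; have -> : z = fan_top q by apply: contrapT => zv; apply: nz; exists z.
  exact: Av.
move=> Zne.
have fpos : forall t, `](0:R), (1:R)]%classic t -> f t <> fan_top q.
  move=> t ht ftv; have := gf t (I01 t ht); rewrite ftv -f0 gf // => t0.
  by move: ht; rewrite -t0 /= in_itv /= ltxx.
have cS1 : connected (f @` `](0:R), (1:R)]%classic).
  apply: connected_continuous_connected.
    by apply/connected_intervalP; exact: interval_is_interval.
  exact: continuous_subspaceW I01 cf.
have I1 : `](0:R), (1:R)]%classic (1 : R) by rewrite /= in_itv /= ltr01 lexx.
pose x := fb hq (f 1).
have hx : forall t, `](0:R), (1:R)]%classic t -> fb hq (f t) = x.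
  move=> t ht; apply: (@fiber_const _ _ _ hq _ cS1).
  - by move=> c [t' ht' <-]; apply: ht_gt0; exact: fpos.
  - by exists t.
  - by exists 1.
pose p := fun t => (x, hI hq (f t)).
have qp : forall t, `](0:R), (1:R)]%classic t -> q (p t) = f t.
  by move=> t ht; rewrite /p -(hx t ht) qpair.
have pfence : forall t, `](0:R), (1:R)]%classic t -> fence q J (p t).
  move=> t ht; apply: subset_closure; rewrite /= qp //; split.
    by apply: AJ; rewrite -fA; exists t => //; exact: I01.
  by move=> /= h; apply: (fpos t ht); exact: h.
have cp : {within `](0:R), (1:R)]%classic, continuous p}.
  apply: (@within_continuous_comp _ _ _ _ f (fun c => (x, hI hq c))).
    move=> c _; apply: pair_cont; [exact: cst_continuous|exact: hI_cont].
  exact: continuous_subspaceW I01 cf.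
have cT : connected (p @` `](0:R), (1:R)]%classic).
  apply: connected_continuous_connected => //.
  by apply/connected_intervalP; exact: interval_is_interval.
have Tsub : p @` `](0:R), (1:R)]%classic `<=` fence q J.
  by move=> z [t ht <-]; exact: pfence.
have cRT : connected (Rt @` (p @` `](0:R), (1:R)]%classic)).
  apply: connected_continuous_connected cT _.
  case: hR => cR _ _; exact: continuous_subspaceW Tsub cR.
pose y := (Rt (p 1)).1.
have hy : forall t, `](0:R), (1:R)]%classic t -> (Rt (p t)).1 = y.
  move=> t ht; apply: (fst_const cRT).
  - by exists (p t) => //; exists t.
  - by exists (p 1) => //; exists 1.
apply: (fiber_leg hq hJ (y := y)).
- exact: hKJ.
- by move=> z [a Aa <-]; apply: hKJ; apply: rJK; exists a => //; exact: AJ.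
- move=> z [a Aa <-]; move: Aa; rewrite -fA => -[t ht <-].
  have [t0|tn0] := eqVneq t 0.
    exists (zeroI R); rewrite t0 f0 rK //; apply/esym/(q_v hq) => //.
  have ht' : `](0:R), (1:R)]%classic t.
    move: ht; rewrite /= !in_itv /= => /andP[h1 h2]; rewrite h2 andbT.
    by rewrite lt_neqAle eq_sym tn0.
  exists (Rt (p t)).2; rewrite -(qp t ht') -hcomm; last exact: pfence.
  by rewrite -(hy t ht') -surjective_pairing.
- exact: Zne.
Qed.


Unset Implicit Arguments. Set Strict Implicit.
Local Close Scope ring_scope.

Theorem mainTheorem14 (R : realType) (C : topologicalType) (q : fanF R -> C)
  (hq : is_fan_quotient q) (J K : set C)
  (hJ : subcontinuum J) (hK : subcontinuum K)
  (hv : K (fan_top q)) (hKJ : K `<=` J)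
  (r : C -> C) (hr : retraction J K r)
  (Rt : fanF R -> fanF R) (hR : retraction (fence q J) (fence q K) Rt)
  (hcomm : forall x, fence q J x -> q (Rt x) = r (q x)) :
  semi_simple q J r.
Proof.
exact: (@main_aux R C q hq J K hJ hK hv hKJ r hr Rt hR hcomm).
Qed.
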